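(* Let $\psi:K\to V$ satisfy, for all $k<k'$ in $K$, $\psi(k)\le\psi(k')$ and $\frac{k}{k'}\psi(k')\le\psi(k)$. Then the mechanism $(f,p)$ defined by $(f(v,k),p(v,k))=(0,0,0)$ if $v\le\psi(k)$ and $(f(v,k),p(v,k))=(k,1,\psi(k))$ otherwise (a ratio-dependent posted price mechanism) is incentive compatible and individually rational.
   Context: An agent has private type $(v,k)\in V\times K$, $V=[0,1]$, $K=(0,1]$, and from an outcome $(a_1,a_2,t)$ with $a_1,a_2\in[0,1]$ (quantities of two divisible goods) and $t\in\mathbb{R}$ (payment by the agent) gets utility $U_{(v,k)}(a_1,a_2,t)=v\min\{a_1/k,a_2\}-t$. A mechanism is a pair $(f,p)$ with $f=(f_1,f_2):V\times K\to[0,1]^2$, $p:V\times K\to\mathbb{R}$. It is incentive compatible if $U_{(v,k)}(f(v,k),p(v,k))\ge U_{(v,k)}(f(v',k'),p(v',k'))$ for all types $(v,k),(v',k')$, and individually rational if $U_{(v,k)}(f(v,k),p(v,k))\ge0$ for all $(v,k)$. *)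

(* Defs.v *)
From Stdlib Require Import Reals.
Open Scope R_scope.

Definition inV (v : R) : Prop := 0 <= v <= 1.
Definition inK (k : R) : Prop := 0 < k <= 1.

(* Outcome: (a1, a2, t) with a1, a2 in [0,1], t real. *)
Definition utility (v k a1 a2 t : R) : R := v * Rmin (a1 / k) a2 - t.

Record mechanism := Mechanism {
  f1 : R -> R -> R;
  f2 : R -> R -> R;
  pay : R -> R -> R }.

Definition feasible (M : mechanism) : Prop :=
  forall v k, inV v -> inK k ->
    0 <= f1 M v k <= 1 /\ 0 <= f2 M v k <= 1.

Definition incentive_compatible (M : mechanism) : Prop :=
  forall v k v' k', inV v -> inK k -> inV v' -> inK k' ->
    utility v k (f1 M v k) (f2 M v k) (pay M v k)
    >= utility v k (f1 M v' k') (f2 M v' k') (pay M v' k').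

Definition individually_rational (M : mechanism) : Prop :=
  forall v k, inV v -> inK k ->
    utility v k (f1 M v k) (f2 M v k) (pay M v k) >= 0.

Definition posted_price (psi : R -> R) : mechanism :=
  Mechanism
    (fun v k => if Rle_dec v (psi k) then 0 else k)
    (fun v k => if Rle_dec v (psi k) then 0 else 1)
    (fun v k => if Rle_dec v (psi k) then 0 else psi k).

(* Main.v *)
Require Import Defs.
From Stdlib Require Import Reals Lra.
Open Scope R_scope.

Lemma dev_bound (psi : R -> R) v k k' :
  (forall k, inK k -> inV (psi k)) ->
  (forall k k', inK k -> inK k' -> k < k' ->
     psi k <= psi k' /\ (k / k') * psi k' <= psi k) ->
  inV v -> inK k -> inK k' ->
  v * Rmin (k' / k) 1 - psi k' <= Rmax 0 (v - psi k).
Proof.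
  intros Hv Hm [v0 v1] [k0 k1] [k'0 k'1].
  destruct (Rlt_or_le k' k) as [Hlt|Hle].
  - destruct (Hm k' k (conj k'0 k'1) (conj k0 k1) Hlt) as [_ H2].
    assert (Hr : k' / k < 1).
    { apply (Rmult_lt_reg_r k); [lra|]. unfold Rdiv. rewrite Rmult_assoc, Rinv_l by lra. lra. }
    assert (Hr0 : 0 < k' / k) by (apply Rdiv_lt_0_compat; lra).
    rewrite Rmin_left by lra.
    assert (v * (k'/k) - psi k' <= (k'/k) * (v - psi k)) by nra.
    destruct (Rle_dec (v - psi k) 0).
    + rewrite Rmax_left by lra. nra.
    + rewrite Rmax_right by lra. nra.
  - assert (Hr : 1 <= k' / k).
    { apply (Rmult_le_reg_r k); [lra|]. unfold Rdiv. rewrite Rmult_assoc, Rinv_l by lra. lra. }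
    rewrite Rmin_right by lra.
    assert (psi k <= psi k').
    { destruct (Rle_lt_or_eq_dec k k' Hle) as [Hne|Heq]; [|subst; lra].
      apply (proj1 (Hm k k' (conj k0 k1) (conj k'0 k'1) Hne)). }
    pose proof (Rmax_r 0 (v - psi k)). lra.
Qed.

Theorem proposition1 (psi : R -> R) :
  (forall k, inK k -> inV (psi k)) ->
  (forall k k', inK k -> inK k' -> k < k' ->
     psi k <= psi k' /\ (k / k') * psi k' <= psi k) ->
  feasible (posted_price psi) /\
  incentive_compatible (posted_price psi) /\
  individually_rational (posted_price psi).
Proof.
  intros Hv Hm.
  assert (Htruth : forall v k, inV v -> inK k ->
    utility v k (f1 (posted_price psi) v k) (f2 (posted_price psi) v k)
      (pay (posted_price psi) v k) = Rmax 0 (v - psi k)).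
  { intros v k HV [k0 k1]. unfold utility; simpl.
    destruct (Rle_dec v (psi k)).
    - unfold Rdiv. rewrite Rmult_0_l, Rmin_left by lra. rewrite Rmax_left by lra. ring.
    - unfold Rdiv. rewrite Rinv_r by lra. rewrite Rmin_left by lra.
      rewrite Rmax_right by lra. ring. }
  split; [|split].
  - intros v k _ [k0 k1]; simpl. destruct (Rle_dec v (psi k)); lra.
  - intros v k v' k' HV HK HV' HK'. rewrite Htruth by assumption.
    unfold utility; simpl. destruct (Rle_dec v' (psi k')).
    + unfold Rdiv. rewrite Rmult_0_l, Rmin_left by lra.
      pose proof (Rmax_l 0 (v - psi k)). lra.
    + pose proof (dev_bound psi v k k' Hv Hm HV HK HK'). lra.
  - intros v k HV HK. rewrite Htruth by assumption.
    pose proof (Rmax_l 0 (v - psi k)). lra.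
Qed.
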